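(* Let $m,n,\ell\in\mathbb N$ and $M\in{\rm Mat}_m(\mathbb Z)$. Let $S$ be the set of all vertices of $\Gamma_{M,\,n}$ lying on directed cycles of length dividing $\ell$. Then any $\mathbb Z$-linear combination of vertices from $S$ is a vertex lying on a directed cycle of length dividing $\ell$. Moreover, if $M$ has finite $\mathbb Z_n$-order, then for any ${\bf x}\in S$ and any $s\in\mathbb Z$ with $\gcd(s,n)=1$, the vertices ${\bf x}$ and $s{\bf x}$ lie on directed cycles of equal length.
   Context: $\mathbb N$ is the set of positive integers and $\mathbb Z_n$ the integers modulo $n$. For $M\in{\rm Mat}_m(\mathbb Z)$, the move graph $\Gamma_{M,\,n}$ is the directed graph with vertex set $\mathbb Z_n^m$ and arc set $\{({\bf x},{\bf y}) : {\bf y}^T=M{\bf x}^T \text{ in } \mathbb Z_n^m\}$ (loops allowed). The $\mathbb Z_n$-order of $M$ is the least positive integer $k$ (if it exists) such that $M^k$ acts as the identity on $\mathbb Z_n^m$. A directed cycle is a cycle in the underlying undirected graph such that in the induced directed subgraph on it every vertex has in-degree and out-degree $1$; a loop counts as a directed $1$-cycle and a pair of opposite arcs as a directed $2$-cycle. *)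

(* Defs.v *)
From mathcomp Require Import all_boot all_order all_algebra.
Set Implicit Arguments. Unset Strict Implicit. Unset Printing Implicit Defensive.
Import Order.TTheory GRing.Theory Num.Theory.
Local Open Scope ring_scope.

Definition zmodn (n : nat) (hn : (0 < n)%N) (z : int) : 'I_n :=
  Ordinal (ltn_pmod (absz (z %% (n%:Z))%Z) hn).

(* Vertices of the move graph Gamma_{M,n}: elements of Z_n^m. *)
Definition vertex (m n : nat) := {ffun 'I_m -> 'I_n}.

Definition move (m n : nat) (hn : (0 < n)%N) (M : 'M[int]_m) (x : vertex m n)
  : vertex m n :=
  [ffun i => zmodn hn (\sum_(j < m) M i j * ((x j : nat)%:Z))].

Definition arc (m n : nat) (hn : (0 < n)%N) (M : 'M[int]_m) (x y : vertex m n)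
  : Prop := y = move hn M x.

(* x lies on a directed cycle of length k in Gamma_{M,n}: there are k pairwise
   distinct vertices c_0, ..., c_{k-1} with arcs c_i -> c_{i+1 mod k},
   one of which is x (k = 1: a loop; k = 2: a pair of opposite arcs). *)
Definition on_dcycle (m n : nat) (hn : (0 < n)%N) (M : 'M[int]_m)
  (x : vertex m n) (k : nat) : Prop :=
  exists c : 'I_k -> vertex m n,
    [/\ injective c,
        (forall i : 'I_k, arc hn M (c i) (c (ordS i)))
      & exists i : 'I_k, x = c i].

Definition inS (m n : nat) (hn : (0 < n)%N) (M : 'M[int]_m) (l : nat)
  (x : vertex m n) : Prop :=
  exists k : nat, (k %| l)%N /\ on_dcycle hn M x k.

Definition lincomb (m n : nat) (hn : (0 < n)%N) (s : seq (int * vertex m n))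
  : vertex m n :=
  [ffun i => zmodn hn (\sum_(p <- s) p.1 * ((p.2 i : nat)%:Z))].

Definition scalev (m n : nat) (hn : (0 < n)%N) (s : int) (x : vertex m n)
  : vertex m n :=
  [ffun i => zmodn hn (s * ((x i : nat)%:Z))].

Definition finite_order (m n : nat) (hn : (0 < n)%N) (M : 'M[int]_m) : Prop :=
  exists k : nat, (0 < k)%N /\ forall x : vertex m n, iter k (move hn M) x = x.

(* Main.v *)
Require Import Defs.
From mathcomp Require Import all_boot all_order all_algebra.
Set Implicit Arguments. Unset Strict Implicit. Unset Printing Implicit Defensive.
Import Order.TTheory GRing.Theory Num.Theory.
Local Open Scope ring_scope.

Lemma val_zmodn n (hn : (0 < n)%N) (a : int) :
  ((zmodn hn a : nat)%:Z) = (a %% n%:Z)%Z.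
Proof.
rewrite /zmodn /= -modz_nat. rewrite gez0_abs ?modz_mod //; apply: modz_ge0.
by rewrite eqz_nat -lt0n.
Qed.

Lemma zmodn_mod n (hn : (0 < n)%N) (a b : int) :
  (a = b %[mod n%:Z])%Z -> zmodn hn a = zmodn hn b.
Proof. by move=> h; apply: val_inj; rewrite /= h. Qed.

Lemma zmodn_ord n (hn : (0 < n)%N) (x : 'I_n) : zmodn hn (x : nat)%:Z = x.
Proof.
apply: val_inj; apply/eqP; rewrite -eqz_nat val_zmodn modz_small //.
by rewrite ltz_nat ltn_ord.
Qed.

Lemma sum_mod (I : Type) (r : seq I) (F G : I -> int) (d : int) :
  (\sum_(i <- r) F i * (G i %% d)%Z = \sum_(i <- r) F i * G i %[mod d])%Z.
Proof.
elim: r => [|a r IH]; first by rewrite !big_nil.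
rewrite !big_cons -modzDm IH modzMmr modzDm //.
Qed.

Lemma move_lincomb m n (hn : (0 < n)%N) (M : 'M[int]_m) (s : seq (int * vertex m n)) :
  move hn M (lincomb hn s) = lincomb hn [seq (p.1, move hn M p.2) | p <- s].
Proof.
apply/ffunP => i; rewrite !ffunE; apply: zmodn_mod.
rewrite big_map /=.
under eq_bigr do rewrite /lincomb ffunE val_zmodn.
under [in RHS]eq_bigr do rewrite /move ffunE val_zmodn.
rewrite sum_mod (sum_mod _ (fun p => p.1)); congr (_ %% _)%Z.
under eq_bigr do rewrite big_distrr.
rewrite exchange_big /=; apply: eq_bigr => p _; rewrite big_distrr /=.
by apply: eq_bigr => j _; rewrite mulrCA.
Qed.

Lemma scalev_lincomb m n (hn : (0 < n)%N) (s : int) (x : vertex m n) :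
  scalev hn s x = lincomb hn [:: (s, x)].
Proof. by apply/ffunP => i; rewrite !ffunE big_seq1. Qed.

Lemma move_scalev m n (hn : (0 < n)%N) (M : 'M[int]_m) s x :
  move hn M (scalev hn s x) = scalev hn s (move hn M x).
Proof. by rewrite !scalev_lincomb move_lincomb. Qed.

Lemma iter_scalev m n (hn : (0 < n)%N) (M : 'M[int]_m) s x j :
  iter j (move hn M) (scalev hn s x) = scalev hn s (iter j (move hn M) x).
Proof. by elim: j => //= j ->; rewrite move_scalev. Qed.

Lemma iter_lincomb m n (hn : (0 < n)%N) (M : 'M[int]_m) s j :
  iter j (move hn M) (lincomb hn s) =
  lincomb hn [seq (p.1, iter j (move hn M) p.2) | p <- s].
Proof.
elim: j => /= [|j ->]; first by rewrite map_id_in // => [[]].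
by rewrite move_lincomb -map_comp.
Qed.

Lemma scalev_inv m n (hn : (0 < n)%N) (s t : int) (x : vertex m n) :
  (t * s = 1 %[mod n%:Z])%Z -> scalev hn t (scalev hn s x) = x.
Proof.
move=> h; apply/ffunP => i; rewrite !ffunE.
rewrite -[RHS](zmodn_ord hn); apply: zmodn_mod.
by rewrite val_zmodn modzMmr mulrA -modzMml h modzMml mul1r.
Qed.

From mathcomp Require Import zify.

Lemma iterM T (f : T -> T) x k q : iter k f x = x -> iter (q * k) f x = x.
Proof. by move=> h; elim: q => //= q IH; rewrite mulSn iterD IH. Qed.

Lemma iter_mod T (f : T -> T) x k : iter k f x = x ->
  forall j, iter j f x = iter (j %% k) f x.
Proof.
by move=> h j; rewrite {1}(divn_eq j k) addnC iterD iterM.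
Qed.

Lemma val_iter_ordS k (i : 'I_k) j : (iter j (@ordS k) i : nat) = ((i + j) %% k)%N.
Proof.
elim: j => /= [|j IH]; first by rewrite addn0 modn_small.
by rewrite IH -addn1 modnDml addn1 addnS.
Qed.

Lemma on_dcycle_iter m n (hn : (0 < n)%N) (M : 'M[int]_m) x k :
  on_dcycle hn M x k -> iter k (move hn M) x = x.
Proof.
case=> c [cinj carc [i ->]].
have H : forall j (i : 'I_k), iter j (move hn M) (c i) = c (iter j (@ordS k) i).
  elim=> //= j IH i0; rewrite IH; exact/esym/carc.
rewrite H; congr (c _); apply: val_inj.
by rewrite /= val_iter_ordS modnDr modn_small.
Qed.

Lemma cycle_of_period m n (hn : (0 < n)%N) (M : 'M[int]_m) x p :
  (0 < p)%N -> iter p (move hn M) x = x ->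
  (forall j, (0 < j < p)%N -> iter j (move hn M) x != x) ->
  on_dcycle hn M x p.
Proof.
move=> p0 hp hmin.
exists (fun i : 'I_p => iter i (move hn M) x); split.
- have key : forall i j : 'I_p, (i < j)%N ->
      iter i (move hn M) x <> iter j (move hn M) x.
    move=> i j lt_ij e.
    have := hmin (p - j + i)%N.
    have -> : (0 < p - j + i < p)%N.
      have := ltn_ord j; lia.
    rewrite iterD e -iterD subnK ?hp ?eqxx; first by move/(_ isT).
    exact: ltnW (ltn_ord j).
  move=> i j e; apply: val_inj => /=.
  case: (ltngtP i j) => // lt; first by case: (key _ _ lt e).
  by case: (key _ _ lt (esym e)).
- move=> i; rewrite /arc /=.
  rewrite -(iter_mod hp) //.
- by exists (Ordinal p0).
Qed.

Lemma min_period m n (hn : (0 < n)%N) (M : 'M[int]_m) x l :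
  (0 < l)%N -> iter l (move hn M) x = x ->
  exists p, [/\ (0 < p)%N, (p %| l)%N, iter p (move hn M) x = x &
    forall j, (0 < j < p)%N -> iter j (move hn M) x != x].
Proof.
move=> l0 hl.
have ex : exists j, (0 < j)%N && (iter j (move hn M) x == x).
  by exists l; rewrite l0 hl eqxx.
case: (ex_minnP ex) => p /andP[p0 /eqP hp] pmin.
exists p; split => //.
- rewrite /dvdn; apply/negPn/negP => nz.
  have := pmin (l %% p)%N; rewrite lt0n nz -(iter_mod hp) hl eqxx /= => /(_ isT).
  by rewrite leqNgt ltn_pmod.
- move=> j /andP[j0 jp]; apply/negP => /eqP e.
  by have := pmin j; rewrite j0 e eqxx leqNgt jp => /(_ isT).
Qed.

Lemma inS_iff m n (hn : (0 < n)%N) (M : 'M[int]_m) l x : (0 < l)%N ->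
  inS hn M l x <-> iter l (move hn M) x = x.
Proof.
move=> l0; split.
- case=> k [kl hk]; have hk' := on_dcycle_iter hk.
  by rewrite (iter_mod hk') (eqP kl).
- move=> hl; case: (min_period l0 hl) => p [p0 pl hp hmin].
  by exists p; split => //; apply: cycle_of_period.
Qed.

Theorem proposition3p2 (m n l : nat) (hm : (0 < m)%N) (hn : (0 < n)%N)
  (hl : (0 < l)%N) (M : 'M[int]_m) :
  (forall s : seq (int * vertex m n),
      (forall p, p \in s -> inS hn M l p.2) ->
      inS hn M l (lincomb hn s)) /\
  (finite_order hn M ->
   forall (x : vertex m n) (s : int),
     inS hn M l x -> gcdz s (n%:Z) = 1%N ->
     exists k : nat, on_dcycle hn M x k /\ on_dcycle hn M (scalev hn s x) k).
Proof.
split.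
- move=> s hs; apply/inS_iff => //; rewrite iter_lincomb.
  congr (lincomb hn _); rewrite -[RHS]map_id; apply/eq_in_map => -[c y] /hs /=.
  by move/inS_iff => ->.
- move=> _ x s /(inS_iff _ _ _ hl) hx hg.
  case: (Bezoutz s n%:Z) => u [v huv].
  have ht : (u * s = 1 %[mod n%:Z])%Z.
    by rewrite -[1]/(Posz 1%N) -hg -huv addrC modzMDl.
  case: (min_period hl hx) => p [p0 _ hp hmin].
  exists p; split; first exact: cycle_of_period.
  apply: cycle_of_period => //; first by rewrite iter_scalev hp.
  move=> j /hmin; apply: contra => /eqP e.
  by rewrite -{1}(scalev_inv hn x ht) iter_scalev e scalev_inv.
Qed.
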